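(* Let $m\le k\le n$ be positive integers, $\mathbf a_1,\dots,\mathbf a_n\in\mathbb R^m$, $\mathbf A=[\mathbf a_1,\dots,\mathbf a_n]\in\mathbb R^{m\times n}$, and let $\hat{\mathbf x}$ (with $(\hat{\mathbf x},\hat w)$) be an optimal solution of the convex relaxation $\max\{w: w\le[\det(\sum_{i\in[n]}x_i\mathbf a_i\mathbf a_i^\top)]^{1/m},\ \sum_i x_i=k,\ \mathbf x\in[0,1]^n\}$. Let $S\subseteq[n]$ with $|S|=s\le k$. For indeterminates $t_1,t_2,t_3$ define $\mathbf y\in\mathbb R^n$ by $y_i=t_3$ if $i\in S$ and $y_i=\hat x_i t_2$ otherwise, and $$F(t_1,t_2,t_3)=\det\Big(\mathbf I_n+t_1\,\mathrm{diag}(\mathbf y)^{1/2}\mathbf A^\top\mathbf A\,\mathrm{diag}(\mathbf y)^{1/2}+\mathrm{diag}(\mathbf y)\Big).$$ Then the coefficient of $t_1^{m}t_2^{k-s}t_3^{s}$ in $F(t_1,t_2,t_3)$ equals $$\sum_{\substack{R\subseteq[n],\,|R|=m\\ r:=|R\setminus S|\le k-s}}\ \prod_{j\in R\setminus S}\hat x_j\,\det\Big(\sum_{i\in R}\mathbf a_i\mathbf a_i^\top\Big)\sum_{\substack{W\subseteq[n]\setminus(S\cup R)\\ |W|=k-s-r}}\ \prod_{j\in W}\hat x_j.$$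
   Context: $[n]=\{1,\dots,n\}$, $\mathbf I_n$ is the $n\times n$ identity matrix and $\mathrm{diag}(\mathbf y)$ the diagonal matrix with diagonal $\mathbf y$. $F$ is regarded as a polynomial in $t_1,t_2,t_3$. *)

(* Defs.v *)
From HB Require Import structures.
From mathcomp Require Import all_boot all_order all_algebra.
From mathcomp Require Import reals exp.
Set Implicit Arguments. Unset Strict Implicit. Unset Printing Implicit Defensive.
Import Order.TTheory GRing.Theory Num.Theory.
Local Open Scope ring_scope.

Section Defs.
Variables (R : realType) (m n : nat).

Definition wgram (A : 'M[R]_(m, n)) (x : 'I_n -> R) : 'M[R]_m :=
  \sum_(i < n) x i *: (col i A *m (col i A)^T).

Definition gram_on (A : 'M[R]_(m, n)) (Rs : {set 'I_n}) : 'M[R]_m :=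
  \sum_(i in Rs) (col i A *m (col i A)^T).

Definition relax_feasible (A : 'M[R]_(m, n)) (k : nat) (x : 'I_n -> R) (w : R) :=
  [/\ \sum_(i < n) x i = k%:R,
      (forall i, 0 <= x i <= 1) &
      w <= powR (\det (wgram A x)) (m%:R^-1)].

Definition relax_optimal (A : 'M[R]_(m, n)) (k : nat) (x : 'I_n -> R) (w : R) :=
  relax_feasible A k x w /\
  (forall x' w', relax_feasible A k x' w' -> w' <= w).

(* Polynomial ring: outer variable t1, middle u2, inner u3, where
   t2 = u2^2 and t3 = u3^2 (formal square roots, so that diag(y)^(1/2)
   is a genuine matrix with polynomial entries). *)
Definition PR := {poly {poly {poly R}}}.
Definition cst (c : R) : PR := c%:P%:P%:P.
Definition T1 : PR := 'X.
Definition U2 : PR := ('X)%:P.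
Definition U3 : PR := ('X)%:P%:P.
Definition T2 : PR := U2 ^+ 2.
Definition T3 : PR := U3 ^+ 2.

Definition yvec (x : 'I_n -> R) (S : {set 'I_n}) : 'rV[PR]_n :=
  \row_i (if i \in S then T3 else cst (x i) * T2).
Definition ysqrt (x : 'I_n -> R) (S : {set 'I_n}) : 'rV[PR]_n :=
  \row_i (if i \in S then U3 else cst (Num.sqrt (x i)) * U2).

Definition Fpoly (A : 'M[R]_(m, n)) (x : 'I_n -> R) (S : {set 'I_n}) : PR :=
  \det (1%:M
        + T1 *: (diag_mx (ysqrt x S) *m map_mx cst (A^T *m A) *m diag_mx (ysqrt x S))
        + diag_mx (yvec x S)).

(* coefficient of t1^a t2^b t3^c, i.e. of t1^a u2^(2b) u3^(2c) *)
Definition coef3 (F : PR) (a b c : nat) : R := ((F`_a)`_(2 * b))`_(2 * c).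

End Defs.

(* Main.v *)
Require Import Defs.
From HB Require Import structures.
From mathcomp Require Import all_boot all_order all_algebra.
From mathcomp Require Import reals exp.
From mathcomp Require Import ring zify.
From mathcomp Require Import fingroup perm.
Import Order.TTheory GRing.Theory Num.Theory.
Local Open Scope ring_scope.
Set Implicit Arguments. Unset Strict Implicit. Unset Printing Implicit Defensive.
Section Gen.
Variable Rg : comNzRingType.

Definition modm n (N : 'M[Rg]_n) (T : {set 'I_n}) : 'M[Rg]_n :=
  \matrix_(i, j) if i \in T then N i j else (i == j)%:R.

Definition Pm n (T : {set 'I_n}) : 'M[Rg]_n := diag_mx (\row_i (i \in T)%:R).

Lemma sylvester p q (X : 'M[Rg]_(p, q)) (Y : 'M[Rg]_(q, p)) :
  \det (1%:M + X *m Y) = \det (1%:M + Y *m X).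
Proof.
pose M0 := block_mx (1%:M : 'M_p) (- X) Y (1%:M : 'M_q).
have h1 : M0 *m block_mx 1%:M X 0 1%:M = block_mx 1%:M 0 Y (1%:M + Y *m X).
  rewrite mulmx_block !mulmx1 !mul1mx !mulmx0 !addr0 ?mul0mx ?addr0.
  by rewrite subrr addrC.
have h2 : block_mx 1%:M X 0 1%:M *m M0 = block_mx (1%:M + X *m Y) 0 Y 1%:M.
  rewrite mulmx_block !mulmx1 !mul1mx !mul0mx !add0r ?addr0.
  by rewrite addNr.
have := congr1 determinant h1; have := congr1 determinant h2.
rewrite !det_mulmx det_ublock det_lblock !det1 !mulr1 mul1r => -> ->.
by rewrite det_lblock det1 mul1r.
Qed.

Lemma modmE n (N : 'M[Rg]_n) T : modm N T = 1%:M + Pm T *m N - Pm T.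
Proof.
apply/matrixP => i j; rewrite /modm /Pm mul_diag_mx !mxE.
case: (i \in T); last first.
  by rewrite mul0r addr0 mul0rn subr0.
by case: eqP => _ /=; ring.
Qed.

Lemma det_modm_E m n (E : 'M[Rg]_(m, n)) (N : 'M[Rg]_n) T :
  E *m E^T = 1%:M -> E^T *m E = Pm T ->
  \det (modm N T) = \det (E *m N *m E^T).
Proof.
move=> h1 h2; rewrite modmE -h2.
have -> : 1%:M + E^T *m E *m N - E^T *m E = 1%:M + E^T *m (E *m N - E).
  by rewrite mulmxBr !mulmxA addrA.
by rewrite sylvester mulmxBl h1 addrC subrK.
Qed.

Lemma det_expand n (d : 'rV[Rg]_n) (N : 'M[Rg]_n) :
  \det (diag_mx d + N) =
  \sum_(T : {set 'I_n}) (\prod_(i in ~: T) d 0 i) * \det (modm N T).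
Proof.
have H (s : 'S_n) : (-1) ^+ s * \prod_i (diag_mx d + N) i (s i) =
  \sum_(T : {set 'I_n}) (-1) ^+ s *
      \prod_i (if i \in T then N i (s i) else d 0 i *+ (i == s i)).
  rewrite (eq_bigr (fun i => N i (s i) + d 0 i *+ (i == s i))); last first.
    by move=> i _; rewrite !mxE addrC.
  by rewrite bigA_distr mulr_sumr.
rewrite /determinant (eq_bigr _ (fun s _ => H s)).
rewrite exchange_big /=; apply: eq_bigr => T _.
rewrite mulr_sumr; apply: eq_bigr => s _.
rewrite mulrCA; congr (_ * _).
rewrite [X in _ * X](eq_bigr (fun i => if i \in T then N i (s i) else (i == s i)%:R)); last first.
  by move=> i _; rewrite mxE.
rewrite (big_mkcond (fun i => i \in ~: T)) -big_split /=.
apply: eq_bigr => i _; rewrite in_setC; case: (i \in T) => /=.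
  by rewrite mul1r.
by rewrite mulr_natr.
Qed.

Lemma exists_E n (T : {set 'I_n}) :
  exists E : 'M[Rg]_(#|T|, n), E *m E^T = 1%:M /\ E^T *m E = Pm T.
Proof.
pose h (c : 'I_#|T|) : 'I_n := enum_val c.
exists (\matrix_(c, j) (j == h c)%:R); split.
  apply/matrixP => c d; rewrite !mxE.
  rewrite (bigD1 (h c)) //= big1 => [|j /negbTE hj]; last by rewrite !mxE hj mul0r.
  rewrite !mxE eqxx mul1r addr0 (inj_eq enum_val_inj) eq_sym //.
apply/matrixP => i j; rewrite !mxE.
under eq_bigr => c _ do rewrite !mxE.
rewrite -(big_enum_val (fun x => (i == x)%:R * (j == x)%:R)) /=.
rewrite (big_mkcond (fun x => x \in T)) (bigD1 i) //= big1 => [|x /negbTE hx]; last first.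
  by rewrite eq_sym hx mul0r if_same.
rewrite eqxx mul1r addr0 eq_sym.
by case: (i \in T); case: (i == j); rewrite ?mulr1n ?mulr0n.
Qed.



Lemma det_modm_diag n (v : 'rV[Rg]_n) T :
  \det (modm (diag_mx v) T) = \prod_(i in T) v 0 i.
Proof.
have -> : modm (diag_mx v) T = diag_mx (\row_i if i \in T then v 0 i else 1).
  apply/matrixP => i j; rewrite !mxE.
  by case: (i \in T); case: (i == j); rewrite ?mulr1n ?mulr0n.
rewrite det_diag [RHS]big_mkcond /=; apply: eq_bigr => i _; rewrite mxE.
by case: (i \in T).
Qed.

Lemma det_modm_gram m n (T : {set 'I_n}) (B : 'M[Rg]_(m, n)) (v : 'rV[Rg]_n) :
  #|T| = m ->
  \det (modm (diag_mx v *m (B^T *m B) *m diag_mx v) T) =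
  (\prod_(i in T) v 0 i) ^+ 2 * \det (B *m Pm T *m B^T).
Proof.
move=> HT; have [E [h1 h2]] := exists_E T; move: E h1 h2; rewrite HT => E h1 h2.
set D := diag_mx v; set D' := E *m D *m E^T.
have PD : Pm T *m D = D *m Pm T.
  apply/matrixP => i j; rewrite /D /Pm mul_diag_mx mul_mx_diag !mxE.
  by case: eqP => [->|_]; rewrite ?mulr0n ?mulr0 ?mul0r // mulrC.
have EP : E *m Pm T = E by rewrite -h2 mulmxA h1 mul1mx.
have ED : E *m D = D' *m E.
  by rewrite /D' -!mulmxA h2 -PD mulmxA EP.
have DE : D *m E^T = E^T *m D'.
  have DT : D^T = D by rewrite /D tr_diag_mx.
  have := congr1 trmx ED; rewrite !trmx_mul trmxK DT => ->.
  by rewrite /D' !mulmxA.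
have D'def : D' = E *m D *m E^T by [].
clearbody D'.
rewrite (det_modm_E _ h1 h2).
have -> : E *m (D *m (B^T *m B) *m D) *m E^T = D' *m (E *m (B^T *m B) *m E^T) *m D'.
  transitivity ((E *m D) *m (B^T *m B) *m (D *m E^T)); first by rewrite !mulmxA.
  by rewrite ED DE !mulmxA.
rewrite !det_mulmx.
have -> : \det D' = \prod_(i in T) v 0 i by rewrite -det_modm_diag (det_modm_E _ h1 h2) D'def.
have -> : E *m (B^T *m B) *m E^T = (B *m E^T)^T *m (B *m E^T).
  by rewrite trmx_mul trmxK !mulmxA.
have -> : B *m Pm T *m B^T = (B *m E^T) *m (B *m E^T)^T.
  by rewrite trmx_mul trmxK -h2 !mulmxA.
by rewrite !det_mulmx det_tr; ring.
Qed.

End Gen.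

Section Comb.
Variable Rg : comNzRingType.

Lemma comb n (S T : {set 'I_n}) (x : 'I_n -> Rg) b :
  \sum_(V : {set 'I_n} | T \subset V)
     (\prod_(i in V :\: S) x i) * ((#|V :\: S| == b) && (S \subset V))%:R
  = if (#|T :\: S| <= b)%N then
      (\prod_(i in T :\: S) x i) *
      \sum_(W : {set 'I_n} | (W \subset ~: (S :|: T)) && (#|W| == b - #|T :\: S|)%N)
         \prod_(i in W) x i
    else 0.
Proof.
set U := S :|: T.
have step1 : \sum_(V : {set 'I_n} | T \subset V)
     (\prod_(i in V :\: S) x i) * ((#|V :\: S| == b) && (S \subset V))%:R
   = \sum_(V : {set 'I_n} | U \subset V) (\prod_(i in V :\: S) x i) * (#|V :\: S| == b)%:R.
  rewrite big_mkcond [RHS]big_mkcond; apply: eq_bigr => V _.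
  rewrite /U subUset.
  by case: (T \subset V); case: (S \subset V); rewrite /= ?andbT ?andbF ?mulr0.
rewrite step1 (reindex_onto (fun W => W :|: U) (fun V => V :\: U)); last first.
  move=> V hV; apply/setP => i; rewrite in_setU in_setD.
  case iU: (i \in U) => /=; last by rewrite orbF.
  by rewrite (subsetP hV).
have cond W : (U \subset W :|: U) && ((W :|: U) :\: U == W) = (W \subset ~: U).
  rewrite subsetUr /=; apply/eqP/idP => [<-|hW].
    by apply/subsetP => i; rewrite in_setD in_setC; case/andP.
  apply/setP => i; rewrite in_setD in_setU; case iW: (i \in W) => /=.
    by have := subsetP hW i iW; rewrite in_setC => ->.
  by case: (i \in U).
rewrite (eq_bigl _ _ cond).
have key (W : {set 'I_n}) : W \subset ~: U ->
  (W :|: U) :\: S = W :|: (T :\: S) /\ [disjoint W & T :\: S].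
  move=> hW; have hWi i : i \in W -> (i \notin S) && (i \notin T).
    by move=> iW; have := subsetP hW i iW; rewrite !inE negb_or.
  split.
    apply/setP => i; rewrite !inE; case iW: (i \in W) => /=.
      by case/andP: (hWi i iW) => /negbTE -> _.
    by case: (i \in S); case: (i \in T).
  rewrite disjoints_subset; apply/subsetP => i iW; rewrite !inE.
  by case/andP: (hWi i iW) => -> ->.
have step2 : forall W : {set 'I_n}, W \subset ~: U ->
   (\prod_(i in (W :|: U) :\: S) x i) * (#|(W :|: U) :\: S| == b)%:R
   = (\prod_(i in T :\: S) x i) * (\prod_(i in W) x i) *
     ((#|T :\: S| <= b)%N && (#|W| == b - #|T :\: S|)%N)%:R.
  move=> W hW; have [e1 e2] := key W hW.
  rewrite e1 (eq_bigl [predU W & T :\: S]); last by move=> i; rewrite !inE.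
  rewrite bigU // cardsU (disjoint_setI0 e2) cards0 subn0 /=.
  rewrite (mulrC (\prod_(i in W) x i)).
  congr (_ * _%:R).
  case: (leqP #|T :\: S| b) => hb /=.
    case: eqP => h; case: eqP => h' //=.
      by exfalso; apply: h'; rewrite -h addnK.
    by exfalso; apply: h; rewrite h' subnK.
  by case: eqP => // h; move: hb; rewrite -h ltnNge leq_addl.
rewrite (eq_bigr _ step2).
case: (leqP #|T :\: S| b) => hb.
  rewrite mulr_sumr big_mkcond [RHS]big_mkcond /=; apply: eq_bigr => W _.
  case: (W \subset ~: U) => //=.
  by case: (#|W| == b - #|T :\: S|)%N; rewrite ?mulr1 ?mulr0.
by rewrite big1 // => W _; rewrite /= mulr0.
Qed.

End Comb.

Lemma modmZ (Rg : comNzRingType) n (c : Rg) (N : 'M[Rg]_n) T :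
  \det (modm (c *: N) T) = c ^+ #|T| * \det (modm N T).
Proof.
have -> : modm (c *: N) T = diag_mx (\row_i if i \in T then c else 1) *m modm N T.
  apply/matrixP => i j; rewrite mul_diag_mx !mxE.
  by case: (i \in T); rewrite ?mul1r.
rewrite det_mulmx det_diag; congr (_ * _).
rewrite -prodr_const [RHS]big_mkcond /=; apply: eq_bigr => i _; rewrite mxE.
by case: (i \in T).
Qed.

Lemma modm_map (Rg Rg' : comNzRingType) (f : {rmorphism Rg -> Rg'}) n (N : 'M[Rg]_n) T :
  modm (map_mx f N) T = map_mx f (modm N T).
Proof.
apply/matrixP => i j; rewrite !mxE.
by case: (i \in T); rewrite ?rmorph_nat.
Qed.

Lemma prod_split (Rg : comNzRingType) n (y : 'I_n -> Rg) (T : {set 'I_n}) :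
  (\prod_(i in ~: T) (1 + y i)) * (\prod_(i in T) y i) =
  \sum_(V : {set 'I_n} | T \subset V) \prod_(i in V) y i.
Proof.
have -> : (\prod_(i in ~: T) (1 + y i)) * (\prod_(i in T) y i) =
    \prod_i (y i + (if i \in T then 0 else 1)).
  rewrite [X in X * _]big_mkcond [X in _ * X]big_mkcond -big_split /=.
  apply: eq_bigr => i _; rewrite in_setC.
  by case: (i \in T) => /=; rewrite ?mul1r ?mulr1 ?addr0 // addrC.
rewrite bigA_distr [RHS]big_mkcond /=; apply: eq_bigr => V _.
case: (boolP (T \subset V)) => hTV.
  rewrite [RHS]big_mkcond /=; apply: eq_bigr => i _.
  case iV: (i \in V) => //.
  have iT : (i \in T) = false by apply/negP => iT; rewrite (subsetP hTV i iT) in iV.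
  by rewrite iT.
have /subsetPn [i iT iV] := hTV.
by rewrite (bigD1 i) //= (negbTE iV) iT mul0r.
Qed.

Section Spec.
Variable R : realType.
Local Notation Q := {poly {poly R}}.

Definition ysq n (x : 'I_n -> R) (S : {set 'I_n}) : 'rV[Q]_n :=
  \row_i (if i \in S then ('X)%:P else (Num.sqrt (x i))%:P%:P * 'X).
Definition yv n (x : 'I_n -> R) (S : {set 'I_n}) : 'rV[Q]_n :=
  \row_i (if i \in S then ('X%:P) ^+ 2 else (x i)%:P%:P * 'X ^+ 2).
Definition Bq m n (A : 'M[R]_(m, n)) : 'M[Q]_(m, n) := map_mx polyC (map_mx polyC A).
Definition N0 m n (A : 'M[R]_(m, n)) x S : 'M[Q]_n :=
  diag_mx (ysq x S) *m ((Bq A)^T *m Bq A) *m diag_mx (ysq x S).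

Lemma Fpoly_eq m n (A : 'M[R]_(m, n)) x S :
  Fpoly A x S = \det (diag_mx (\row_i (1 + yv x S 0 i)%:P) + 'X *: map_mx polyC (N0 A x S)).
Proof.
rewrite /Fpoly; congr (\det _).
have e1 : diag_mx (ysqrt x S) = map_mx polyC (diag_mx (ysq x S)).
  rewrite map_diag_mx; congr diag_mx; apply/rowP => i; rewrite !mxE.
  by case: (i \in S); rewrite ?rmorphM.
have e2 : map_mx (@cst R) (A^T *m A) = map_mx polyC ((Bq A)^T *m Bq A).
  apply/matrixP => i j; rewrite !mxE /cst !rmorph_sum; apply: eq_bigr => l _.
  by rewrite !mxE !rmorphM.
rewrite e1 e2 -!map_mxM -/(N0 A x S) addrAC; congr (_ + _).
apply/matrixP => i j; rewrite !mxE.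
case: (i == j); rewrite ?mulr1n ?mulr0n ?addr0 //.
rewrite rmorphD rmorph1; congr (_ + _).
by case: (i \in S); rewrite /T3 /T2 /U3 /U2 /cst ?rmorphM ?rmorphXn.
Qed.



Lemma F_coef m n (A : 'M[R]_(m, n)) x S :
  (Fpoly A x S)`_m = \sum_(T : {set 'I_n})
    ((\prod_(i in ~: T) (1 + yv x S 0 i)) * \det (modm (N0 A x S) T)) * (m == #|T|)%:R.
Proof.
rewrite Fpoly_eq det_expand coef_sum; apply: eq_bigr => T _.
rewrite modmZ modm_map det_map_mx.
under eq_bigr do rewrite mxE.
rewrite -rmorph_prod mulrCA -rmorphM mulrC coefCM coefXn.
by rewrite eq_sym.
Qed.



Lemma gram_Pm m n (A : 'M[R]_(m, n)) T : gram_on A T = A *m Pm R T *m A^T.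
Proof.
apply/matrixP => p q; rewrite /gram_on summxE !mxE big_mkcond /=.
apply: eq_bigr => i _; rewrite mul_mx_diag !mxE big_ord1 !mxE.
by case: (i \in T); rewrite ?mulr1 ?mulr0 ?mul0r.
Qed.

Lemma Pm_map (Rg Rg' : comNzRingType) (f : {rmorphism Rg -> Rg'}) n (T : {set 'I_n}) :
  map_mx f (Pm Rg T) = Pm Rg' T.
Proof.
by rewrite /Pm map_diag_mx; congr diag_mx; apply/rowP => i; rewrite !mxE rmorph_nat.
Qed.

Lemma term_eq m n (A : 'M[R]_(m, n)) (x : 'I_n -> R) (S T : {set 'I_n}) :
  (forall i, 0 <= x i) -> #|T| = m ->
  (\prod_(i in ~: T) (1 + yv x S 0 i)) * \det (modm (N0 A x S) T) =
  (\det (gram_on A T))%:P%:P * \sum_(V : {set 'I_n} | T \subset V) \prod_(i in V) yv x S 0 i.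
Proof.
move=> hx hT; rewrite /N0 det_modm_gram //.
have -> : Bq A *m Pm _ T *m (Bq A)^T = map_mx polyC (map_mx polyC (gram_on A T)).
  by rewrite gram_Pm /Bq !map_mxM !map_trmx !Pm_map.
rewrite !det_map_mx -prodrXl -prod_split.
have -> : \prod_(i in T) ysq x S 0 i ^+ 2 = \prod_(i in T) yv x S 0 i.
  apply: eq_bigr => i _; rewrite !mxE; case: (i \in S) => //.
  by rewrite exprMn -!rmorphXn sqr_sqrtr.
by rewrite mulrA mulrC.
Qed.

Lemma prod_yv n (x : 'I_n -> R) S (V : {set 'I_n}) :
  \prod_(i in V) yv x S 0 i =
  (\prod_(i in V :\: S) x i)%:P%:P * 'X ^+ (2 * #|V :\: S|) * ('X ^+ (2 * #|V :&: S|))%:P.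
Proof.
rewrite (bigID (fun i => i \in S)) /= mulrC.
have -> : \prod_(i in V | i \in S) yv x S 0 i = ('X ^+ (2 * #|V :&: S|))%:P.
  rewrite (eq_bigr (fun _ => ('X%:P) ^+ 2)); last by move=> i /andP [_ hi]; rewrite mxE hi.
  rewrite prodr_const rmorphXn -exprM mulnC; congr (_ ^+ _).
  by rewrite mulnC; congr (_ * _)%N; apply: eq_card => i; rewrite !inE.
rewrite (eq_bigr (fun i => (x i)%:P%:P * 'X ^+ 2)); last first.
  by move=> i /andP [_ /negbTE hi]; rewrite mxE hi.
rewrite big_split prodr_const -exprM -!rmorph_prod.
have -> : #|(fun i => (i \in V) && (i \notin S))| = #|V :\: S|.
  by apply: eq_card => i; rewrite !inE andbC.
rewrite mulnC (eq_bigl (fun i => i \in V :\: S)) //.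
by move=> i; rewrite !inE andbC.
Qed.

Lemma coef_mono (a : R) i j p q :
  (((a%:P%:P * 'X ^+ i * ('X ^+ j)%:P : Q)`_p)`_q) = a * (p == i)%:R * (q == j)%:R.
Proof.
rewrite coefMC -mulrA coefCM coefXn.
case: (p == i); rewrite ?mulr0 ?mul0r ?coef0 ?mulr0 //.
by rewrite /= !mulr1n mulr1 coefCM coefXn mul1r.
Qed.



Lemma card_sub_eq n (S V : {set 'I_n}) : (#|S| == #|V :&: S|) = (S \subset V).
Proof.
rewrite eq_sym (subset_leqif_cards (subsetIr V S)).2.
apply/idP/idP => [/eqP <-|h]; first exact: subsetIl.
by apply/eqP/setIidPr.
Qed.

End Spec.

Unset Implicit Arguments.

Theorem proposition3 (R : realType) (m k n : nat) (A : 'M[R]_(m, n))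
  (xhat : 'I_n -> R) (S : {set 'I_n}) :
  (0 < m)%N -> (m <= k)%N -> (k <= n)%N ->
  (exists what : R, relax_optimal A k xhat what) ->
  (#|S| <= k)%N ->
  coef3 (Fpoly A xhat S) m (k - #|S|) #|S| =
  \sum_(Rs : {set 'I_n} | (#|Rs| == m) && (#|Rs :\: S| <= k - #|S|)%N)
     (\prod_(j in Rs :\: S) xhat j) * \det (gram_on A Rs) *
     \sum_(W : {set 'I_n} | (W \subset ~: (S :|: Rs))
                             && (#|W| == k - #|S| - #|Rs :\: S|)%N)
        \prod_(j in W) xhat j.
Proof.
move=> _ _ _ [w [[_ hx01 _] _]] _.
have hx : forall i, 0 <= xhat i by move=> i; case/andP: (hx01 i).
set b := (k - #|S|)%N.
rewrite /coef3 F_coef !coef_sum.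
rewrite [RHS]big_mkcond /=; apply: eq_bigr => T _.
case: (eqVneq #|T| m) => hT; last first.
  by rewrite /= mulr0n mulr0 !coef0.
rewrite /= mulr1n mulr1 (term_eq _ _ hx hT) coefCM coefCM !coef_sum.
rewrite (eq_bigr (fun V : {set 'I_n} => (\prod_(i in V :\: S) xhat i) *
     ((#|V :\: S| == b) && (S \subset V))%:R)); last first.
  move=> V _; rewrite prod_yv coef_mono eqn_mul2l /= eqn_mul2l /= card_sub_eq.
  rewrite eq_sym; case: (_ == _); case: (S \subset V); rewrite /= ?mulr1 ?mulr0 //.
rewrite comb /=.
case: ifP => _; last by rewrite mulr0.
by rewrite mulrCA mulrA.
Qed.
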